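(* For $n,m\ge 0$ let $f(n,m)$ be the number of linked cycles on $[n]$ with exactly $m$ singly covered minimal elements. Then $f(1,1)=1$, $f(n,0)=0$ for $n\ge1$, $f(n,m)=0$ if $n<m$, and for all $n\ge2$, $m\ge1$, $$f(n,m)=m\,f(n,m+1)+f(n-1,m-1).$$
   Context: Two finite sets of integers $E,F$ are nearly disjoint if for every $i\in E\cap F$ either ($i=\min(E)$, $|E|>1$, $i\ne\min(F)$) or ($i=\min(F)$, $|F|>1$, $i\ne\min(E)$). A linked partition of $[n]$ is a set of nonempty subsets (blocks) of $[n]$ with union $[n]$, any two distinct blocks nearly disjoint; each element lies in one or two blocks (singly/doubly covered). A singly covered minimal element is a singly covered element that is the minimum of its block. A linked cycle on $[n]$ is a linked partition of $[n]$ together with a cyclic arrangement of the elements of each block. *)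

(* Defs.v *)
From mathcomp Require Import all_boot all_fingroup.
Set Implicit Arguments. Unset Strict Implicit. Unset Printing Implicit Defensive.

(* The ground set [n] = {1,...,n} is modelled by 'I_n = {0,...,n-1}
   via the order isomorphism i |-> i+1 (all notions below only use
   membership and the order, so counts are unchanged). *)

Section LinkedCycles.
Variable n : nat.
Local Notation T := ('I_n).

Definition is_min (i : T) (B : {set T}) : bool :=
  (i \in B) && [forall j in B, (i <= j)%N].

Definition nearly_disjoint (E F : {set T}) : bool :=
  [forall i in E :&: F,
     (is_min i E && (1 < #|E|) && ~~ is_min i F)
  || (is_min i F && (1 < #|F|) && ~~ is_min i E)].

Definition linked_partition (P : {set {set T}}) : bool :=
  [&& set0 \notin P,
      \bigcup_(B in P) B == [set: T]
    & [forall E in P, forall F in P, (E != F) ==> nearly_disjoint E F]].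

Definition cyclic_on (s : {perm T}) (B : {set T}) : bool :=
  [forall x, (x \notin B) ==> (s x == x)] &&
  [forall x in B, porbit s x == B].

(* A linked cycle: a linked partition P together with a cyclic arrangement
   c B of every block B of P (c is normalised to 1 off P, so that a linked
   cycle is determined exactly by P and the arrangements of its blocks). *)
Definition linked_cycle (P : {set {set T}}) (c : {ffun {set T} -> {perm T}})
  : bool :=
  linked_partition P &&
  [forall B, if B \in P then cyclic_on (c B) B else c B == 1%g].

Definition singly_covered (P : {set {set T}}) (i : T) : bool :=
  #|[set B in P | i \in B]| == 1%N.

Definition num_scme (P : {set {set T}}) : nat :=
  #|[set i : T | singly_covered P i && [exists B in P, is_min i B]]|.

End LinkedCycles.

Definition f (n m : nat) : nat :=
  #|[set x : {set {set 'I_n}} * {ffun {set 'I_n} -> {perm 'I_n}}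
        | linked_cycle x.1 x.2 && (num_scme x.1 == m)]|.

(* Main.v *)
Require Import Defs.
From mathcomp Require Import all_boot all_fingroup.
From mathcomp Require Import zify.
Set Implicit Arguments. Unset Strict Implicit. Unset Printing Implicit Defensive.

Section Basics.
Variable N : nat.
Local Notation T := ('I_N).
Implicit Types (B E F : {set T}) (P : {set {set T}}) (i j x y : T).

Lemma is_minP i B : reflect (i \in B /\ forall j, j \in B -> (i <= j)%N) (is_min i B).
Proof.
rewrite /is_min; apply: (iffP andP) => [[iB /forall_inP H]|[iB H]]; split => //.
by apply/forall_inP.
Qed.

Lemma is_min_uniq i j B : is_min i B -> is_min j B -> i = j.
Proof.
move=> /is_minP[iB Hi] /is_minP[jB Hj]; apply: val_inj; apply/eqP.
by rewrite eqn_leq Hi // Hj.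
Qed.

Lemma is_min_mem i B : is_min i B -> i \in B.
Proof. by case/is_minP. Qed.

Lemma exists_min B : B != set0 -> exists i, is_min i B.
Proof.
case/set0Pn => x xB.
case: (arg_minnP (fun i : T => nat_of_ord i) xB) => i iB Hi.
by exists i; apply/is_minP.
Qed.

Lemma ndP E F : reflect (forall i, i \in E -> i \in F ->
   (is_min i E && (1 < #|E|)%N && ~~ is_min i F)
|| (is_min i F && (1 < #|F|)%N && ~~ is_min i E)) (nearly_disjoint E F).
Proof.
apply: (iffP forall_inP) => H i.
  by move=> iE iF; apply: H; rewrite inE iE.
by rewrite inE => /andP[iE iF]; apply: H.
Qed.

Lemma nd_sym E F : nearly_disjoint E F = nearly_disjoint F E.
Proof.
by apply/ndP/ndP => H i iE iF; rewrite orbC; apply: H.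
Qed.

Lemma nd_xor E F i : nearly_disjoint E F -> i \in E -> i \in F ->
  is_min i E != is_min i F.
Proof.
move/ndP => H iE iF; case/orP: (H i iE iF) => /andP[/andP[-> _]] /negbTE -> //.
Qed.

Lemma nd_card E F i : nearly_disjoint E F -> i \in E -> i \in F ->
  is_min i E -> (1 < #|E|)%N.
Proof.
move/ndP => H iE iF mE; case/orP: (H i iE iF) => /andP[/andP[_ h]] //.
by rewrite mE.
Qed.

Lemma porbit_step (s : {perm T}) x z : z \in porbit s x -> s z \in porbit s x.
Proof.
case/porbitP => k ->; apply/porbitP; exists k.+1.
by rewrite expgSr permM.
Qed.

Lemma porbit_sub (s : {perm T}) x (C : {set T}) : x \in C ->
  (forall z, z \in C -> s z \in C) -> porbit s x \subset C.
Proof.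
move=> xC HC; apply/subsetP => z /porbitP[k ->].
elim: k => [|k IH]; first by rewrite expg0 perm1.
by rewrite expgSr permM; apply: HC.
Qed.

Lemma cyclic_onP (s : {perm T}) B : reflect
  ((forall x, x \notin B -> s x = x) /\ (forall x, x \in B -> porbit s x = B))
  (cyclic_on s B).
Proof.
rewrite /cyclic_on; apply: (iffP andP) => [[/forallP H1 /forall_inP H2]|[H1 H2]].
  split => x xB; first by apply/eqP; move: (H1 x); rewrite xB.
  by apply/eqP; apply: H2.
split; first by apply/forallP => x; apply/implyP => xB; apply/eqP; apply: H1.
by apply/forall_inP => x xB; apply/eqP; apply: H2.
Qed.

Lemma cyclic_on1 y : cyclic_on 1%g [set y].
Proof.
apply/cyclic_onP; split => [x _|x]; first by rewrite perm1.
rewrite inE => /eqP ->; apply/setP => z; rewrite inE.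
apply/porbitP/eqP => [[k ->]|->]; last by exists 0; rewrite expg0 perm1.
by rewrite expg1n perm1.
Qed.

Lemma cyclic_on_set1 (s : {perm T}) y : cyclic_on s [set y] -> s = 1%g.
Proof.
case/cyclic_onP => H1 H2; apply/permP => x; rewrite perm1.
case: (eqVneq x y) => [->|xy]; last by apply: H1; rewrite inE.
have: s y \in porbit s y by rewrite porbit_step // porbit_id.
by rewrite H2 ?inE // => /eqP.
Qed.


Lemma cyc_closed (s : {perm T}) B z : cyclic_on s B -> z \in B -> s z \in B.
Proof.
case/cyclic_onP => _ H2 zB; rewrite -(H2 z zB); exact/porbit_step/porbit_id.
Qed.

Lemma cyc_ins (q : {perm T}) B y a : cyclic_on q B -> y \in B -> a \notin B ->
  cyclic_on (tperm y a * q) (a |: B).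
Proof.
move=> qB yB aB; have /cyclic_onP[H1 H2] := qB.
have ya : y != a by apply: contraNneq aB => <-.
have qa : q a = a := H1 a aB.
set r := (tperm y a * q)%g.
have rE x : r x = q (tperm y a x) by rewrite permM.
have Hra : porbit r a = a |: B.
  apply/eqP; rewrite eqEsubset; apply/andP; split.
    apply: porbit_sub; first exact: setU11.
    move=> z; rewrite !in_setU1 rE => /orP[/eqP->|zB].
      by rewrite tpermR (cyc_closed qB yB) orbT.
    case: (eqVneq z y) => [->|zy]; first by rewrite tpermL qa eqxx.
    have az : a != z by apply: contraNneq aB => ->.
    have yz : y != z by rewrite eq_sym.
    by rewrite (tpermD yz az) (cyc_closed qB zB) orbT.
  apply/subsetP => z; rewrite in_setU1 => /orP[/eqP->|zB]; first exact: porbit_id.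
  have: z \in porbit q y by rewrite H2.
  case/porbitP => k ->; elim: k => [|k IH].
    rewrite expg0 perm1 porbit_sym; apply/porbitP; exists 1%N.
    by rewrite expg1 rE tpermL qa.
  rewrite expgSr permM.
  set w := (q ^+ k)%g y in IH *.
  case: (eqVneq w y) => [wy|wy].
    have -> : q w = r a by rewrite rE tpermR wy.
    exact/porbit_step/porbit_id.
  have wB : w \in B by rewrite -(H2 y yB) mem_porbit.
  have -> : q w = r w.
    have aw : a != w by apply: contraNneq aB => ->.
    have yw : y != w by rewrite eq_sym.
    by rewrite rE (tpermD yw aw).
  exact: porbit_step.
apply/cyclic_onP; split => [x|x xB].
  rewrite in_setU1 negb_or => /andP[xa xB].
  have yx : y != x by apply: contraNneq xB => <-.
  by rewrite rE (tpermD yx) ?H1 // eq_sym.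
by apply/eqP; rewrite -Hra eq_porbit_mem Hra.
Qed.

Lemma cyc_del (p : {perm T}) B a : cyclic_on p B -> a \in B -> B != [set a] ->
  cyclic_on (p * tperm a (p a)) (B :\ a).
Proof.
move=> pB aB Ba; have /cyclic_onP[H1 H2] := pB.
have paB : p a \in B := cyc_closed pB aB.
have pa_a : p a != a.
  apply: contraNneq Ba => paa; apply/eqP; rewrite -(H2 a aB).
  apply/eqP; rewrite eqEsubset; apply/andP; split.
    by apply: porbit_sub; rewrite ?inE // => z /set1P ->; rewrite paa inE.
  by rewrite sub1set porbit_id.
set s := (p * tperm a (p a))%g.
have sE x : s x = tperm a (p a) (p x) by rewrite permM.
have x0B : p a \in B :\ a by rewrite !inE pa_a.
have Hs : porbit s (p a) = B :\ a.
  apply/eqP; rewrite eqEsubset; apply/andP; split.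
    apply: porbit_sub => // z; rewrite !inE => /andP[za zB].
    rewrite sE; case: tpermP => [_|/perm_inj zz|/eqP pza _]; rewrite ?paB ?pa_a //.
      by rewrite zz eqxx in za.
    by rewrite pza (cyc_closed pB zB).
  apply/subsetP => z; rewrite !inE => /andP[za zB].
  have: z \in porbit p (p a) by rewrite H2.
  case/porbitP => k zE.
  suff: ((p ^+ k)%g (p a) == a) || ((p ^+ k)%g (p a) \in porbit s (p a)).
    by rewrite -zE (negbTE za).
  elim: k {zE} => [|k IH]; first by rewrite expg0 perm1 porbit_id orbT.
  rewrite expgSr permM; set w := (p ^+ k)%g (p a) in IH *.
  case: (eqVneq w a) => [->|wa]; first by rewrite porbit_id orbT.
  rewrite (negbTE wa) /= in IH; case: (eqVneq (p w) a) => [//|pwa] /=.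
  have -> : p w = s w.
    have h1 : a != p w by rewrite eq_sym.
    have h2 : p a != p w by apply: contra wa => /eqP/perm_inj ->.
    by rewrite sE (tpermD h1 h2).
  exact: porbit_step.
apply/cyclic_onP; split => [x|x xB].
  rewrite !inE negb_and negbK => /orP[/eqP->|xB].
    by rewrite sE tpermR.
  have h1 : a != x by apply: contraNneq xB => <-.
  have h2 : p a != x by apply: contraNneq xB => <-.
  by rewrite sE (H1 x xB) (tpermD h1 h2).
by apply/eqP; rewrite -Hs eq_porbit_mem Hs.
Qed.

Lemma perm_ins_del (p : {perm T}) y a : p y = a ->
  (tperm y a * (p * tperm a (p a)))%g = p.
Proof.
move=> pya; apply/permP => x; rewrite !permM.
case: (tpermP y a x) => [->|->|/eqP xy /eqP xa].
- by rewrite pya tpermR.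
- by rewrite pya tpermL.
rewrite tpermD //; last by apply: contra xa => /eqP/perm_inj ->.
by rewrite -pya; apply: contra xy => /eqP/perm_inj ->.
Qed.

Lemma perm_del_ins (q : {perm T}) y a : q a = a ->
  ((tperm y a * q) * tperm a ((tperm y a * q)%g a))%g = q.
Proof.
move=> qa; rewrite [(_ * q)%g a]permM tpermR.
apply/permP => x; rewrite !permM.
case: (tpermP y a x) => [->|->|/eqP xy /eqP xa].
- by rewrite qa tpermL.
- by rewrite tpermR qa.
rewrite tpermD //; last by apply: contra xy => /eqP/perm_inj ->.
by rewrite -{1}qa; apply: contra xa => /eqP/perm_inj ->.
Qed.

End Basics.

Lemma card_bij (X Y : finType) (SX : {set X}) (SY : {set Y}) (phi : X -> Y) (psi : Y -> X) :
  {in SX, forall x, phi x \in SY} -> {in SY, forall y, psi y \in SX} ->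
  {in SX, cancel phi psi} -> {in SY, cancel psi phi} -> #|SX| = #|SY|.
Proof.
move=> H1 H2 H3 H4.
have inj : {in SX &, injective phi}.
  by move=> x1 x2 h1 h2 e; rewrite -(H3 x1 h1) -(H3 x2 h2) e.
rewrite -(card_in_imset inj); apply: eq_card => y.
apply/imsetP/idP => [[x xS ->]|yS]; first exact: H1.
by exists (psi y); [apply: H2 | rewrite H4].
Qed.

Section LC.
Variable N : nat.
Local Notation T := ('I_N).
Local Notation LT := ({set {set T}} * {ffun {set T} -> {perm T}})%type.
Implicit Types (B E F : {set T}) (P : {set {set T}}) (i j x y : T) (A : {set T}) (c : {ffun {set T} -> {perm T}}).

Definition lpA A P : bool := [&& set0 \notin P, \bigcup_(B in P) B == A &
  [forall E in P, forall F in P, (E != F) ==> nearly_disjoint E F]].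
Definition cycc P (c : {ffun {set T} -> {perm T}}) : bool :=
  [forall B, if B \in P then cyclic_on (c B) B else c B == 1%g].
Definition lcA A P c := lpA A P && cycc P c.
Definition scmeS P := [set i : T | singly_covered P i && [exists B in P, is_min i B]].
Definition LCs A m := [set x : {set {set T}} * {ffun {set T} -> {perm T}} |
   lcA A x.1 x.2 && (num_scme x.1 == m)].
Definition G A m := #|LCs A m|.

Lemma num_scmeE P : num_scme P = #|scmeS P|.
Proof. by []. Qed.

Lemma lpAP A P : reflect [/\ set0 \notin P, (forall B i, B \in P -> i \in B -> i \in A),
   (forall i, i \in A -> exists2 B, B \in P & i \in B) &
   (forall E F, E \in P -> F \in P -> E != F -> nearly_disjoint E F)] (lpA A P).
Proof.
rewrite /lpA; apply: (iffP and3P) => [[H1 /eqP H2 /forall_inP H3]|[H1 H2 H3 H4]].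
  split => //.
  - by move=> B i BP iB; rewrite -H2; apply/bigcupP; exists B.
  - by move=> i; rewrite -H2 => /bigcupP[B BP iB]; exists B.
  - move=> E F EP FP EF; move/forall_inP: (H3 E EP) => /(_ F FP).
    by rewrite EF.
split => //.
  apply/eqP; apply/setP => i; apply/bigcupP/idP => [[B BP iB]|iA]; first exact: H2 iB.
  by case: (H3 i iA) => B BP iB; exists B.
apply/forall_inP => E EP; apply/forall_inP => F FP; apply/implyP; exact: H4.
Qed.

Lemma cyccP P c : reflect ((forall B, B \in P -> cyclic_on (c B) B) /\
   (forall B, B \notin P -> c B = 1%g)) (cycc P c).
Proof.
apply: (iffP forallP) => [H|[H1 H2] B]; first split => B.
- by move=> BP; move: (H B); rewrite BP.
- by move=> BP; move: (H B); rewrite (negbTE BP) => /eqP.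
by case: ifP => BP; [apply: H1 | rewrite H2 ?BP].
Qed.

Lemma scmeP P i : reflect (exists2 B, B \in P & is_min i B /\
   (forall F, F \in P -> i \in F -> F = B)) (i \in scmeS P).
Proof.
rewrite inE /singly_covered; apply: (iffP andP) => [[/cards1P[B0 HB0] /existsP[B /andP[BP mB]]]|[B BP [mB HB]]].
  have: B \in [set B1 in P | i \in B1] by rewrite inE BP (is_min_mem mB).
  rewrite HB0 inE => /eqP eB; exists B => //; split => // F FP iF.
  have: F \in [set B1 in P | i \in B1] by rewrite inE FP iF.
  by rewrite HB0 inE eB => /eqP.
split; last by apply/existsP; exists B; rewrite BP.
apply/cards1P; exists B; apply/setP => F; rewrite !inE.
apply/andP/eqP => [[FP iF]|->]; first exact: HB.
by rewrite BP (is_min_mem mB).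
Qed.

Lemma lcA_sub A P c B i : lcA A P c -> B \in P -> i \in B -> i \in A.
Proof. by case/andP => /lpAP[_ H _ _] _; apply: H. Qed.

Lemma scme_sub A P c : lcA A P c -> scmeS P \subset A.
Proof.
move=> H; apply/subsetP => i /scmeP[B BP [mB _]].
exact: (lcA_sub H BP (is_min_mem mB)).
Qed.

Variables (a : T) (A : {set T}).
Hypothesis aA : a \notin A.
Hypothesis ltA : forall x, x \in A -> (x < a)%N.
Local Notation A' := (a |: A).

Lemma nd_set1a F : a \notin F -> nearly_disjoint [set a] F.
Proof. by move=> aF; apply/ndP => i; rewrite inE => /eqP-> aF'; rewrite aF' in aF. Qed.

Lemma p1_up P c : lcA A P c ->
  lcA A' ([set a] |: P) c /\ scmeS ([set a] |: P) = a |: scmeS P.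
Proof.
move=> H; have /andP[/lpAP[H1 H2 H3 H4] /cyccP[C1 C2]] := H.
have aP B : B \in P -> a \notin B by move=> BP; apply: contra aA; apply: H2.
have saP : [set a] \notin P by apply: contra aA => /H2; apply; rewrite inE.
split.
  apply/andP; split.
    apply/lpAP; split.
    - by rewrite !inE negb_or H1 andbT eq_sym; apply/set0Pn; exists a; rewrite inE.
    - move=> B i; rewrite !inE => /orP[/eqP->|BP iB]; first by rewrite inE => ->.
      by rewrite (H2 B i BP iB) orbT.
    - move=> i; rewrite !inE => /orP[/eqP->|iA]; first by exists [set a]; rewrite !inE ?eqxx.
      by case: (H3 i iA) => B BP iB; exists B; rewrite // !inE BP orbT.
    - move=> E F; rewrite !inE => /orP[/eqP->|EP] /orP[/eqP->|FP] EF.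
      + by rewrite eqxx in EF.
      + exact/nd_set1a/aP.
      + by rewrite nd_sym; apply/nd_set1a/aP.
      + exact: H4.
  apply/cyccP; split => B; rewrite !inE.
    by case/orP=> [/eqP->|/C1//]; rewrite C2 //; exact: cyclic_on1.
  by rewrite negb_or => /andP[_ /C2].
apply/setP => i; rewrite in_setU1; apply/scmeP/idP.
  case=> B; rewrite in_setU1 => /orP[/eqP->|BP] [mB HB].
    by move: (is_min_mem mB); rewrite inE => ->.
  have ia : i != a by apply: contraTneq (is_min_mem mB) => ->; exact: aP.
  rewrite (negbTE ia) /=; apply/scmeP; exists B => //; split => // F FP iF.
  by apply: HB => //; rewrite in_setU1 FP orbT.
case/orP => [/eqP->|/scmeP[B BP [mB HB]]].
  exists [set a]; first by rewrite in_setU1 eqxx.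
  split; first by apply/is_minP; split => [|j /set1P ->]; rewrite ?inE.
  move=> F; rewrite in_setU1 => /orP[/eqP//|FP aF].
  by move: (aP F FP); rewrite aF.
exists B; first by rewrite in_setU1 BP orbT.
split => // F; rewrite in_setU1 => /orP[/eqP->|FP] iF; last exact: HB.
move: (is_min_mem mB) iF; rewrite inE => iB /eqP ia.
by move: (aP B BP); rewrite -ia iB.
Qed.

Lemma p1_down P c : lcA A' P c -> [set a] \in P ->
  lcA A (P :\ [set a]) c /\ [set a] |: (P :\ [set a]) = P.
Proof.
move=> H aP; have /andP[/lpAP[H1 H2 H3 H4] /cyccP[C1 C2]] := H.
have naF F : F \in P -> F != [set a] -> a \notin F.
  move=> FP Fa; apply/negP => aF.
  have Fa' : [set a] != F by rewrite eq_sym.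
  have mA : is_min a [set a] by apply/is_minP; split => [|j /set1P->]; rewrite ?inE.
  by have := nd_card (H4 _ _ aP FP Fa') (set11 a) aF mA; rewrite cards1.
split; last by rewrite setD1K.
apply/andP; split.
  apply/lpAP; split.
  - by rewrite !inE negb_and H1 orbT.
  - move=> B i; rewrite !inE => /andP[Ba BP] iB.
    have := H2 B i BP iB; rewrite !inE => /orP[/eqP ia|//].
    by move: (naF B BP Ba); rewrite -ia iB.
  - move=> i iA; case: (H3 i); first by rewrite !inE iA orbT.
    move=> B BP iB; exists B => //; rewrite !inE BP andbT.
    by apply: contraTneq iB => ->; rewrite inE; apply: contraNneq aA => <-.
  - by move=> E F; rewrite !inE => /andP[_ EP] /andP[_ FP]; apply: H4.
apply/cyccP; split => B; rewrite !inE.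
  by case/andP => _; apply: C1.
rewrite negb_and negbK => /orP[/eqP->|/C2//].
by apply: cyclic_on_set1; apply: C1.
Qed.


Lemma p1_num P c : lcA A P c -> num_scme ([set a] |: P) = (num_scme P).+1.
Proof.
move=> H; rewrite !num_scmeE (p1_up H).2 cardsU1.
have -> : a \notin scmeS P by apply: contra aA => /(subsetP (scme_sub H)).
by [].
Qed.

Lemma saP_notin P c : lcA A P c -> [set a] \notin P.
Proof. by move=> H; apply: contra aA => /(lcA_sub H); apply; rewrite inE. Qed.

Lemma part1_card m : #|[set x in LCs A' m | [set a] \in x.1]| =
  if m is m'.+1 then G A m' else 0%N.
Proof.
case: m => [|m].
  apply/eqP; rewrite cards_eq0; apply/eqP/setP => x; rewrite !inE.
  apply/negP => /andP[/andP[H /eqP e] aP].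
  have [H' E] := p1_down H aP.
  by move: e; rewrite -E (p1_num H').
rewrite /G; symmetry; apply: (card_bij (phi := fun x : LT => ([set a] |: x.1, x.2))
   (psi := fun x : LT => (x.1 :\ [set a], x.2))).
- move=> [P c]; rewrite !inE /= => /andP[H /eqP e].
  by rewrite (p1_up H).1 (p1_num H) e !eqxx ?setU11.
- move=> [P c]; rewrite !inE /= => /andP[/andP[H /eqP e] aP].
  have [H' E] := p1_down H aP.
  rewrite H' /=; have := p1_num H'; rewrite E e => -[->]; by rewrite eqxx.
- move=> [P c]; rewrite inE /= => /andP[H _].
  by rewrite setU1K // (saP_notin H).
- move=> [P c]; rewrite !inE /= => /andP[_ aP].
  by rewrite setD1K.
Qed.


Definition MIN P i := [exists B in P, is_min i B].
Definition NM P i := [exists F in P, (i \in F) && ~~ is_min i F].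

Lemma lcA_nd A0 P c E F : lcA A0 P c -> E \in P -> F \in P -> E != F -> nearly_disjoint E F.
Proof. by case/andP => /lpAP[_ _ _ H] _; apply: H. Qed.

Lemma scme_char A0 P c i : lcA A0 P c -> (i \in scmeS P) = MIN P i && ~~ NM P i.
Proof.
move=> H; apply/scmeP/andP => [[B BP [mB HB]]|[/existsP[B /andP[BP mB]] nnm]].
  split; first by apply/existsP; exists B; rewrite BP.
  apply/existsP => -[F /andP[FP /andP[iF nmF]]].
  by move: nmF; rewrite (HB F FP iF) mB.
exists B => //; split => // F FP iF.
have mF : is_min i F.
  apply: contraNT nnm => nmF; apply/existsP; exists F; by rewrite FP iF nmF.
apply/eqP; apply: contraT => FB.
by have := nd_xor (lcA_nd H FP BP FB) iF (is_min_mem mB); rewrite mF mB.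
Qed.

Lemma is_min_addmax B i : B \subset A -> i \in B -> is_min i (a |: B) = is_min i B.
Proof.
move=> BA iB; apply/is_minP/is_minP => [[_ Hi]|[_ Hi]]; split => //.
- by move=> j jB; apply: Hi; rewrite in_setU1 jB orbT.
- by rewrite in_setU1 iB orbT.
move=> j; rewrite in_setU1 => /orP[/eqP->|jB]; last exact: Hi.
exact/ltnW/ltA/(subsetP BA).
Qed.

Lemma not_is_min_a B j : B \subset A' -> j \in B -> j != a -> ~~ is_min a B.
Proof.
move=> BA jB ja; apply/negP => /is_minP[_ H].
have jA : j \in A by move: (subsetP BA j jB); rewrite in_setU1 (negbTE ja).
by have := H j jB; rewrite leqNgt ltA.
Qed.

Definition Bold P (y : T) (b : bool) : {set T} :=
  odflt [set y] [pick B in P | (y \in B) && (is_min y B != b)].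

Definition ins (x : LT) (ch : T * bool) : LT :=
  let Bo := Bold x.1 ch.1 ch.2 in let Bn := a |: Bo in
  (Bn |: (x.1 :\ Bo),
   [ffun B => if B == Bn then (tperm ch.1 a * x.2 Bo)%g
              else if B == Bo then 1%g else x.2 B]).

Definition Ch P := [set ch : T * bool | (ch.1 \in A) && (~~ ch.2 || (ch.1 \notin scmeS P))].

Lemma BoldP P c y (b : bool) : lcA A P c -> y \in A -> (b -> y \notin scmeS P) ->
  [/\ y \in Bold P y b, is_min y (Bold P y b) = ~~ b &
   (Bold P y b \in P \/
    [/\ Bold P y b = [set y], b = false & forall B, B \in P -> ~~ is_min y B])].
Proof.
move=> H yA Hb; rewrite /Bold; case: pickP => [B /andP[BP /andP[yB mB]]|none] /=.
  split => //; last by left.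
  by move: mB {Hb}; case: (is_min y B); case: b.
have Hn B : B \in P -> y \in B -> is_min y B = b.
  by move=> BP yB; move: (none B); rewrite BP yB /= => /negbT; rewrite negbK => /eqP.
have mins : is_min y [set y] by apply/is_minP; split => [|j /set1P->]; rewrite ?inE.
case: b Hb Hn none => Hb Hn _.
  have /negP[] := Hb erefl.
  rewrite (scme_char y H); case/andP: H => /lpAP[_ _ H3 H4] _.
  case: (H3 y yA) => B BP yB; apply/andP; split.
    by apply/existsP; exists B; rewrite BP Hn.
  by apply/existsP => -[F /andP[FP /andP[yF]]]; rewrite Hn.
split; rewrite ?inE ?mins //; right; split => // B BP.
by apply/negP => mB; move: (Hn B BP (is_min_mem mB)); rewrite mB.
Qed.


Lemma mem_ins_P P Bo B : (B \in (a |: Bo) |: (P :\ Bo)) = (B == a |: Bo) || ((B != Bo) && (B \in P)).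
Proof. by rewrite !inE. Qed.

Lemma ins_ok P c y b : lcA A P c -> (y, b) \in Ch P ->
  [/\ lcA A' (ins (P, c) (y, b)).1 (ins (P, c) (y, b)).2,
      [set a] \notin (ins (P, c) (y, b)).1 & scmeS (ins (P, c) (y, b)).1 = scmeS P].
Proof.
move=> H; rewrite inE /= => /andP[yA Hb'].
have Hb : b -> y \notin scmeS P by move=> bt; move: Hb'; rewrite bt.
have [yBo mBo HBo] := BoldP H yA Hb.
rewrite /ins /=; set Bo := Bold P y b in yBo mBo HBo *; set Bn := a |: Bo.
have /andP[/lpAP[H1 H2 H3 H4] /cyccP[C1 C2]] := H.
have aP B : B \in P -> a \notin B by move=> BP; apply: contra aA; apply: H2.
have BoA : Bo \subset A.
  case: HBo => [BoP|[-> _ _]]; last by rewrite sub1set.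
  by apply/subsetP => i; apply: H2.
have aBo : a \notin Bo by apply: contra aA; apply: (subsetP BoA).
have ya : y != a by apply: contraNneq aA => <-.
have BnBo : Bn != Bo by apply/negP => /eqP e; move: aBo; rewrite -e setU11.
have cBo : cyclic_on (c Bo) Bo.
  case: HBo => [/C1 //|[e bf Hm]]; rewrite C2 ?e; first exact: cyclic_on1.
  by apply/negP => /Hm; rewrite -e mBo bf.
have cBn : 1 < #|Bn|.
  by rewrite /Bn cardsU1 aBo ltnS card_gt0; apply/set0Pn; exists y.
have BnP B : B \in P -> B != Bn.
  by move=> BP; apply/negP => /eqP e; move: (aP B BP); rewrite e setU11.
have mBn i : i \in Bn -> i != a -> i \in Bo /\ is_min i Bn = is_min i Bo.
  move=> iBn ia; have iBo : i \in Bo by move: iBn; rewrite in_setU1 (negbTE ia).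
  by split => //; rewrite is_min_addmax.
have ndBn F : F \in P -> F != Bo -> nearly_disjoint Bn F.
  move=> FP FBo; apply/ndP => i iBn iF.
  have ia : i != a by apply: contraNneq (aP F FP) => <-.
  have [iBo ->] := mBn i iBn ia; rewrite cBn.
  case: HBo => [BoP|[e bf Hm]].
    have BoF : Bo != F by rewrite eq_sym.
    move/ndP: (H4 _ _ BoP FP BoF) => /(_ i iBo iF).
    by case: (is_min i Bo) (is_min i F) => [] [] /=; rewrite ?andbT ?andbF ?orbF.
  move: iBo; rewrite e inE => /eqP ->.
  by rewrite (negbTE (Hm F FP)) -e mBo bf.
have HP' : lcA A' (Bn |: (P :\ Bo))
  [ffun B => if B == Bn then (tperm y a * c Bo)%g else if B == Bo then 1%g else c B].
  apply/andP; split.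
    apply/lpAP; split.
    - rewrite mem_ins_P (negbTE H1) andbF orbF eq_sym; apply/set0Pn; exists a; exact: setU11.
    - move=> B i; rewrite mem_ins_P => /orP[/eqP->|/andP[_ BP] iB].
        rewrite in_setU1 => /orP[/eqP->|iBo]; first exact: setU11.
        by rewrite in_setU1 (subsetP BoA i iBo) orbT.
      by rewrite in_setU1 (H2 B i BP iB) orbT.
    - move=> i; rewrite in_setU1 => /orP[/eqP->|iA].
        by exists Bn; rewrite ?mem_ins_P ?eqxx ?setU11.
      case: (H3 i iA) => B BP iB; case: (eqVneq B Bo) => [eB|BBo].
        by exists Bn; rewrite ?mem_ins_P ?eqxx // in_setU1 -eB iB orbT.
      by exists B; rewrite // mem_ins_P BBo BP orbT.
    - move=> E F; rewrite !mem_ins_P => /orP[/eqP->|/andP[EBo EP]] /orP[/eqP->|/andP[FBo FP]].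
      + by rewrite eqxx.
      + by move=> _; apply: ndBn.
      + by move=> _; rewrite nd_sym; apply: ndBn.
      + exact: H4.
  apply/cyccP; split => B.
    rewrite mem_ins_P ffunE => /orP[/eqP->|/andP[BBo BP]].
      by rewrite eqxx; apply: cyc_ins.
    by rewrite (negbTE (BnP B BP)) (negbTE BBo); apply: C1.
  rewrite mem_ins_P negb_or ffunE => /andP[/negbTE -> H'].
  case: (eqVneq B Bo) => // BBo; apply: C2.
  by move: H'; rewrite BBo.
split => //.
  rewrite mem_ins_P negb_or; apply/andP; split.
    apply/negP => /eqP/setP/(_ y); rewrite !inE (negbTE ya) /=.
    by rewrite yBo.
  by apply/negP => /andP[_ /aP]; rewrite inE eqxx.
apply/setP => i; rewrite (scme_char i HP') (scme_char i H) /MIN /NM.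
case: (eqVneq i a) => [->|ia].
  have -> : [exists B in P, is_min a B] = false.
    by apply/negbTE/negP => /existsP[B /andP[BP /is_min_mem aB]]; move: (aP B BP); rewrite aB.
  rewrite andFb; apply/negbTE/negP => /andP[/existsP[B /andP[]]] + + _.
  rewrite mem_ins_P => /orP[/eqP->|/andP[_ BP] /is_min_mem aB].
    have BnA' : Bn \subset A' by rewrite /Bn setUS.
    have yBn : y \in Bn by rewrite in_setU1 yBo orbT.
    by move=> m; move: (not_is_min_a BnA' yBn ya); rewrite m.
  by move: (aP B BP); rewrite aB.
have NMe : [exists F in Bn |: (P :\ Bo), (i \in F) && ~~ is_min i F] =
           [exists F in P, (i \in F) && ~~ is_min i F].
  apply/existsP/existsP => -[F /andP[FP' /andP[iF nmF]]].
    move: FP'; rewrite mem_ins_P => /orP[/eqP eF|/andP[_ FP]]; last first.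
      by exists F; rewrite FP iF nmF.
    rewrite eF in iF nmF; have [iBo e] := mBn i iF ia; rewrite e in nmF.
    case: HBo => [BoP|[eBo bf _]]; first by exists Bo; rewrite BoP iBo nmF.
    by move: iBo nmF; rewrite {1}eBo inE => /eqP ->; rewrite mBo bf.
  case: (eqVneq F Bo) => [eF|FBo].
    have iBn : i \in Bn by rewrite in_setU1 -eF iF orbT.
    have [_ e] := mBn i iBn ia.
    by exists Bn; rewrite mem_ins_P eqxx iBn e -eF nmF.
  by exists F; rewrite mem_ins_P FBo FP' iF nmF orbT.
rewrite NMe.
have MINe : [exists B in Bn |: (P :\ Bo), is_min i B] =
            [exists B in P, is_min i B] || (Bo \notin P) && (i == y).
  apply/existsP/orP => [[B /andP[BP' mB]]|].
    move: BP'; rewrite mem_ins_P => /orP[/eqP eB|/andP[_ BP]]; last first.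
      by left; apply/existsP; exists B; rewrite BP mB.
    rewrite eB in mB; have [iBo e] := mBn i (is_min_mem mB) ia; rewrite e in mB.
    case: (boolP (Bo \in P)) => BoP; first by left; apply/existsP; exists Bo; rewrite BoP mB.
    case: HBo => [BoP'|[eBo _ _]]; first by rewrite BoP' in BoP.
    by right; move: iBo; rewrite eBo inE => ->; rewrite andbT.
  case=> [/existsP[B /andP[BP mB]]|/andP[BoP /eqP iy]].
    case: (eqVneq B Bo) => [eB|BBo].
      have iBn : i \in Bn by rewrite in_setU1 -eB (is_min_mem mB) orbT.
      have [_ e] := mBn i iBn ia.
      by exists Bn; rewrite mem_ins_P eqxx e -eB mB.
    by exists B; rewrite mem_ins_P BBo BP mB orbT.
  have iBn : i \in Bn by rewrite in_setU1 iy yBo orbT.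
  have [_ e] := mBn i iBn ia.
  by exists Bn; rewrite mem_ins_P eqxx e iy mBo; case: HBo BoP => [->//|[_ -> _]].
rewrite MINe.
case: (boolP (Bo \in P)) => BoP; first by rewrite /= orbF.
case: (eqVneq i y) => [iy|iy]; last by rewrite /= ?andbF ?orbF.
have -> : [exists F in P, (i \in F) && ~~ is_min i F].
  case: HBo => [BoP'|[_ _ Hm]]; first by rewrite BoP' in BoP.
  case: (H3 y yA) => F FP yF; apply/existsP; exists F.
  by rewrite FP iy yF Hm.
by rewrite /= ?andbF.
Qed.


Lemma cyc_fixed (p : {perm T}) B z : cyclic_on p B -> z \in B -> p z = z -> B = [set z].
Proof.
move=> /cyclic_onP[_ H2] zB pz; apply/eqP; rewrite eqEsubset -(H2 z zB).
rewrite sub1set porbit_id andbT; apply: porbit_sub; rewrite ?inE //.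
by move=> w /set1P ->; rewrite pz inE.
Qed.

Lemma card_le1_set1 B y : (#|B| <= 1)%N -> y \in B -> B = [set y].
Proof.
move=> cB yB; apply/eqP; rewrite eq_sym eqEcard sub1set yB cards1 //.
Qed.

Definition Ba P := odflt set0 [pick B in P | a \in B].

Definition del (x : LT) : LT * (T * bool) :=
  let P := x.1 in let c := x.2 in
  let B1 := Ba P in let p := c B1 in let y := (p^-1)%g a in let Bo := B1 :\ a in
  let drop := (Bo == [set y]) && [exists F in P, (F != B1) && (y \in F)] in
  ((if drop then P :\ B1 else Bo |: (P :\ B1),
    [ffun B => if B == Bo then (p * tperm a (p a))%g else if B == B1 then 1%g else c B]),
   (y, ~~ is_min y Bo)).

Lemma del_ok P c : lcA A' P c -> [set a] \notin P ->
  [/\ lcA A (del (P, c)).1.1 (del (P, c)).1.2, (del (P, c)).2 \in Ch (del (P, c)).1.1 &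
      ins (del (P, c)).1 (del (P, c)).2 = (P, c)].
Proof.
move=> H sa; have /andP[/lpAP[H1 H2 H3 H4] /cyccP[C1 C2]] := H.
have [B1 B1P aB1] : exists2 B1, B1 \in P & a \in B1.
  by case: (H3 a (setU11 _ _)) => B BP aB; exists B.
have minaF F : F \in P -> a \in F -> ~~ is_min a F.
  move=> FP aF; have FA : F \subset A' by apply/subsetP => i; apply: H2.
  have : F != [set a] by apply: contraNneq sa => <-.
  move=> Fa; have : F :\ a != set0.
    apply: contra Fa => /eqP e; apply/eqP/setP => i; rewrite inE.
    apply/idP/eqP => [iF|->//]; apply/eqP; apply: contraT => ia.
    by move/setP: e => /(_ i); rewrite !inE ia iF.
  case/set0Pn => j; rewrite inE => /andP[ja jF].
  by rewrite inE in ja; exact: not_is_min_a FA jF ja.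
have uniqa F : F \in P -> a \in F -> F = B1.
  move=> FP aF; apply/eqP; apply: contraT => FB.
  by have := nd_xor (H4 _ _ FP B1P FB) aF aB1; rewrite (negbTE (minaF F FP aF)) (negbTE (minaF B1 B1P aB1)).
have BaE : Ba P = B1.
  rewrite /Ba; case: pickP => [B /andP[BP aB]|none] /=; first exact: uniqa.
  by move: (none B1); rewrite B1P aB1.
rewrite /del /= BaE.
set Bo := B1 :\ a; set p := c B1; set y := (p^-1)%g a.
have B1A : Bo \subset A.
  apply/subsetP => i; rewrite !inE => /andP[ia iB].
  by move: (H2 B1 i B1P iB); rewrite in_setU1 (negbTE ia).
have B1ne : B1 != [set a] by apply: contraNneq sa => <-.
have cp : cyclic_on p B1 by apply: C1.
have py : p y = a by rewrite /y permKV.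
have yB1 : y \in B1.
  apply: contraT => yB; have := (cyclic_onP _ _ cp).1 y yB; rewrite py => ay.
  by move: aB1; rewrite ay (negbTE yB).
have ya : y != a.
  apply/eqP => e; move: py; rewrite e => /(cyc_fixed cp aB1) e'.
  by rewrite e' eqxx in B1ne.
have yBo : y \in Bo by rewrite !inE ya.
have B1E : a |: Bo = B1 by rewrite setD1K.
have mBo i : i \in Bo -> is_min i B1 = is_min i Bo.
  by move=> iBo; rewrite -B1E is_min_addmax.
have BoP : Bo \notin P.
  apply/negP => BoP; have BoB1 : Bo != B1.
    by apply/negP => /eqP e; move: aB1; rewrite -e !inE eqxx.
  by have := nd_xor (H4 _ _ BoP B1P BoB1) yBo yB1; rewrite mBo // eqxx.
set s := (p * tperm a (p a))%g.
have cs : cyclic_on s Bo by apply: cyc_del.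
set drop := (Bo == [set y]) && _.
set P0 := if drop then _ else _.
set c0 := [ffun B => _].
have memP B : (B \in P0) = ((B == Bo) && ~~ drop) || ((B != B1) && (B \in P)).
  by rewrite /P0; case: ifP => dr; rewrite !inE ?dr ?andbF ?andbT //=.
have ndBo F : F \in P -> F != B1 -> ~~ drop -> Bo != F -> nearly_disjoint Bo F.
  move=> FP FB1 ndr BoF; apply/ndP => i iBo iF.
  have iB1 : i \in B1 by move: iBo; rewrite !inE => /andP[].
  have B1F : B1 != F by rewrite eq_sym.
  move/ndP: (H4 B1 F B1P FP B1F) => /(_ i iB1 iF); rewrite mBo //.
  have cBo : 1 < #|Bo|.
    rewrite ltnNge; apply/negP => c1; have e := card_le1_set1 c1 yBo.
    move: ndr; rewrite /drop e eqxx /=; apply/negP/negPn/existsP; exists F.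
    by rewrite FP FB1 /=; move: iBo iF; rewrite e inE => /eqP ->.
  rewrite cBo; case: (is_min i Bo) (is_min i F) => [] [] //=; rewrite ?andbT ?andbF ?orbF //.
have HP : lcA A P0 c0.
  apply/andP; split.
    apply/lpAP; split.
    - apply/negP; rewrite memP => /orP[/andP[/eqP e _]|/andP[_ s0]].
        by move: yBo; rewrite -e inE.
      by rewrite s0 in H1.
    - move=> B i; rewrite memP => /orP[/andP[/eqP-> _]|/andP[BB1 BP] iB].
        by move/(subsetP B1A).
      have := H2 B i BP iB; rewrite in_setU1 => /orP[/eqP ia|//].
      by move: iB; rewrite ia => /(uniqa B BP) e; rewrite e eqxx in BB1.
    - move=> i iA; have iA' : i \in A' by rewrite in_setU1 iA orbT.
      case: (H3 i iA') => B BP iB; case: (eqVneq B B1) => [eB|BB1]; last first.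
        by exists B; rewrite // memP BB1 BP orbT.
      have iBo : i \in Bo.
        by rewrite !inE -eB iB andbT; apply: contraNneq aA => <-.
      case: (boolP drop) => dr.
        move: (dr) => /andP[/eqP eBo /existsP[F /andP[FP /andP[FB1 yF]]]].
        exists F; first by rewrite memP FB1 FP orbT.
        by move: iBo; rewrite eBo inE => /eqP ->.
      by exists Bo; rewrite // memP eqxx dr.
    - move=> E F; rewrite !memP.
      move=> /orP[/andP[/eqP-> ndr]|/andP[EB1 EP]] /orP[/andP[/eqP-> ndr']|/andP[FB1 FP]] EF.
      + by rewrite eqxx in EF.
      + exact: ndBo.
      + by rewrite nd_sym; apply: ndBo => //; rewrite eq_sym.
      + exact: H4.
  apply/cyccP; split => B.
    rewrite memP ffunE => /orP[/andP[/eqP-> _]|/andP[BB1 BP]]; first by rewrite eqxx.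
    case: (eqVneq B Bo) => [->|BBo]; first by rewrite ?eqxx.
    by rewrite (negbTE BB1); apply: C1.
  rewrite memP negb_or ffunE => /andP[h1 h2].
  case: (eqVneq B Bo) => [eB|BBo].
    move: h1; rewrite eB eqxx /= negbK => /andP[/eqP e _].
    by apply: (@cyclic_on_set1 _ _ y); rewrite -e.
  case: (eqVneq B B1) => [//|BB1]; apply: C2.
  by move: h2; rewrite BB1.
have yA : y \in A := subsetP B1A y yBo.
have BoldE : Bold P0 y (~~ is_min y Bo) = Bo.
  rewrite /Bold; case: pickP => [B /andP[BP /andP[yB mB]]|none] /=.
    apply/eqP; apply: contraT => BBo.
    move: BP; rewrite memP (negbTE BBo) /= => /andP[BB1 BP].
    have := nd_xor (H4 _ _ BP B1P BB1) yB yB1; rewrite mBo //.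
    by move: mB; case: (is_min y B); case: (is_min y Bo).
  case: (boolP drop) => dr; first by case/andP: dr => /eqP ->.
  move: (none Bo); rewrite memP eqxx dr yBo /=.
  by case: (is_min y Bo).
split => //.
- rewrite inE /= yA /= negbK; case: (boolP (is_min y Bo)) => //= nm.
  rewrite (scme_char y HP) negb_and negbK; apply/orP; right.
  apply/existsP; exists Bo; rewrite nm yBo andbT memP eqxx /=.
  rewrite andbT; apply/orP; left.
  move: nm; apply: contra => /andP[/eqP -> _]; apply/is_minP; split => [|j /set1P ->]; rewrite ?inE //.
rewrite /ins /= BoldE B1E; congr pair.
  have e : P0 :\ Bo = P :\ B1.
    apply/setP => B; rewrite !inE memP.
    case: (eqVneq B Bo) => [->|BBo] /=; last by rewrite ?andbF.
    by rewrite (negbTE BoP) ?andbF.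
  by rewrite e setD1K.
apply/ffunP => B; rewrite !ffunE.
case: (eqVneq B B1) => [->|BB1].
  by rewrite ?ffunE ?eqxx perm_ins_del.
case: (eqVneq B Bo) => [->|BBo]; first by rewrite C2.
by rewrite ?ffunE ?(negbTE BBo) ?(negbTE BB1).
Qed.


Lemma del_ins P c y b : lcA A P c -> (y, b) \in Ch P -> del (ins (P, c) (y, b)) = ((P, c), (y, b)).
Proof.
move=> H hCh; have := hCh; rewrite inE /= => /andP[yA Hb'].
have Hb : b -> y \notin scmeS P by move=> bt; move: Hb'; rewrite bt.
have [yBo mBo HBo] := BoldP H yA Hb.
rewrite /ins /=; set Bo := Bold P y b in yBo mBo HBo *; set Bn := a |: Bo.
have /andP[/lpAP[H1 H2 H3 H4] /cyccP[C1 C2]] := H.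
have aP B : B \in P -> a \notin B by move=> BP; apply: contra aA; apply: H2.
have BoA : Bo \subset A.
  case: HBo => [BoP|[-> _ _]]; last by rewrite sub1set.
  by apply/subsetP => i; apply: H2.
have aBo : a \notin Bo by apply: contra aA; apply: (subsetP BoA).
have cBo : cyclic_on (c Bo) Bo.
  case: HBo => [/C1 //|[e bf Hm]]; rewrite C2 ?e; first exact: cyclic_on1.
  by apply/negP => /Hm; rewrite -e mBo bf.
have BnP : Bn \notin P by apply/negP => /aP; rewrite setU11.
have BaE : Ba (Bn |: (P :\ Bo)) = Bn.
  rewrite /Ba; case: pickP => [B /andP[BP' aB]|none] /=.
    move: BP'; rewrite mem_ins_P => /orP[/eqP//|/andP[_ BP]].
    by move: (aP B BP); rewrite aB.
  by move: (none Bn); rewrite mem_ins_P eqxx setU11.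
rewrite /del /= BaE ffunE eqxx.
have cBoa : c Bo a = a := (cyclic_onP _ _ cBo).1 a aBo.
have ry : (tperm y a * c Bo)%g y = a by rewrite permM tpermL cBoa.
have yE : ((tperm y a * c Bo)^-1)%g a = y := canLR (permK _) (esym ry).
have BoE : Bn :\ a = Bo by rewrite /Bn setU1K.
rewrite yE BoE perm_del_ins // mBo negbK.
have PE : (Bn |: (P :\ Bo)) :\ Bn = P :\ Bo.
  by rewrite setU1K // !inE negb_and BnP orbT.
rewrite PE; congr (pair (pair _ _) _).
  case: HBo => [BoP|[eBo bf Hm]].
    case: ifP => [/andP[/eqP eBo /existsP[F /andP[FP' /andP[FBn yF]]]]|_].
      move: FP'; rewrite mem_ins_P (negbTE FBn) /= => /andP[FBo FP].
      have mBoy : is_min y Bo by rewrite eBo; apply/is_minP; split => [|j /set1P ->]; rewrite ?inE.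
      have BoF : Bo != F by rewrite eq_sym.
      by have := nd_card (H4 _ _ BoP FP BoF) yBo yF mBoy; rewrite eBo cards1.
    by rewrite setD1K.
  have BoP : Bo \notin P by apply/negP => /Hm; rewrite mBo bf.
  have PE' : P :\ Bo = P.
    by apply/setP => B; rewrite !inE; case: eqVneq => // ->; rewrite (negbTE BoP).
  case: ifP => // /negbT/negP[]; apply/andP; split; first by rewrite eBo.
  case: (H3 y yA) => F FP yF; apply/existsP; exists F.
  have FBo : F != Bo by apply: contraNneq BoP => <-.
  have FBn : F != Bn by apply/negP => /eqP e; move: (aP F FP); rewrite e setU11.
  by rewrite mem_ins_P FBo FP FBn yF orbT.
apply/ffunP => B; rewrite !ffunE.
case: (eqVneq B Bo) => [->//|BBo].
case: (eqVneq B Bn) => [->|BBn]; first by rewrite C2.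
by rewrite ?ffunE ?(negbTE BBo) ?(negbTE BBn).
Qed.


Lemma card_Ch P c : lcA A P c -> #|Ch P| = (2 * #|A| - num_scme P)%N.
Proof.
move=> H.
have -> : Ch P = setX A [set false] :|: setX (A :\: scmeS P) [set true].
  by apply/setP => -[y b]; rewrite !inE; case: b; rewrite /= ?andbT ?andbF ?orbF // andbC.
rewrite cardsU !cardsX !cards1 !muln1.
have -> : setX A [set false] :&: setX (A :\: scmeS P) [set true] = set0.
  by apply/setP => -[y b]; rewrite !inE; case: b; rewrite /= ?andbF.
rewrite cards0 subn0 cardsD (setIidPr (scme_sub H)) num_scmeE.
by rewrite mul2n -addnn addnBA // subset_leq_card // (scme_sub H).
Qed.

Definition SS m := [set p : LT * (T * bool) | (p.1 \in LCs A m) && (p.2 \in Ch p.1.1)].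

Lemma card_SS m : #|SS m| = ((2 * #|A| - m) * G A m)%N.
Proof.
rewrite -sum1_card (partition_big fst (mem (LCs A m))); last first.
  by move=> p; rewrite /SS inE; case/andP.
rewrite /G mulnC -sum_nat_const; apply: eq_bigr => x xL.
have xL' : x \in LCs A m := xL.
have [H e] : lcA A x.1 x.2 /\ num_scme x.1 = m.
  by move: xL'; rewrite /LCs inE => /andP[h1 /eqP h2].
have CE := card_Ch H; rewrite e in CE; rewrite -CE sum1_card.
have inj : injective (fun ch : T * bool => (x, ch)) by move=> u v [].
rewrite -(card_imset _ inj); apply: eq_card => -[x' ch]; rewrite /SS -topredE /= inE /=.
apply/andP/imsetP => [[/andP[_ h] /eqP ex]|[ch' chC [-> ->]]].
  by move: h; rewrite ex => h; exists ch.
by rewrite xL' chC.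
Qed.


Lemma part2_card m : #|[set x in LCs A' m | [set a] \notin x.1]| = #|SS m|.
Proof.
apply: (card_bij (phi := del) (psi := fun p : LT * (T * bool) => ins p.1 p.2)).
- move=> [P c]; rewrite /LCs !inE => /andP[/andP[H /eqP e] sa].
  have [Hd hCh Hi] := del_ok H sa.
  move: Hd hCh Hi; case: (del (P, c)) => [[P0 c0] [y b]] Hd hCh Hi.
  have [_ _ Hs] := ins_ok Hd hCh; rewrite Hi /= in Hs.
  rewrite /SS /LCs /= Hd num_scmeE -Hs -num_scmeE e eqxx /=.
  by move: hCh; rewrite /Ch /scmeS !inE.
- move=> [[P c] [y b]]; rewrite /SS /LCs !inE /= => /andP[/andP[H /eqP e] hCh].
  have {}hCh : (y, b) \in Ch P by rewrite /Ch /scmeS !inE.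
  have [H' sa Hs] := ins_ok H hCh.
  move: H' sa Hs; rewrite /ins /= => -> sa Hs.
  by rewrite num_scmeE Hs -num_scmeE e eqxx /=; move: sa; rewrite !inE.
- move=> [P c]; rewrite /LCs !inE /= => /andP[/andP[H _] sa].
  by have [_ _ ->] := del_ok H sa.
- move=> [[P c] [y b]]; rewrite /SS /LCs !inE /= => /andP[/andP[H _] hCh].
  have {}hCh : (y, b) \in Ch P by rewrite /Ch /scmeS !inE.
  exact: del_ins.
Qed.

Lemma G_rec m : G A' m = ((if m is m'.+1 then G A m' else 0) + (2 * #|A| - m) * G A m)%N.
Proof.
rewrite -part1_card -card_SS -part2_card /G.
rewrite -(cardsID [set x : LT | [set a] \in x.1] (LCs A' m)).
have e1 : LCs A' m :&: [set x : LT | [set a] \in x.1] = [set x in LCs A' m | [set a] \in x.1].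
  by apply/setP => x; rewrite !inE.
have e2 : LCs A' m :\: [set x : LT | [set a] \in x.1] = [set x in LCs A' m | [set a] \notin x.1].
  by apply/setP => x; rewrite !inE andbC.
by rewrite e1 e2.
Qed.

End LC.
Fixpoint F (k m : nat) : nat :=
  if k is k'.+1 then ((if m is m'.+1 then F k' m' else 0) + (2 * k' - m) * F k' m)%N
  else (m == 0 : nat).

Lemma FS k m : F k.+1 m = ((if m is m'.+1 then F k m' else 0) + (2 * k - m) * F k m)%N.
Proof. by []. Qed.

Lemma F0 k : F k.+1 0 = 0.
Proof. by elim: k => [|k IH] //; rewrite FS IH muln0. Qed.

Lemma Fgt n m : n < m -> F n m = 0.
Proof.
elim: n m => [|n IH] [|m] // h.
by rewrite FS !IH ?muln0 // ltnW.
Qed.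

Lemma FD n m : 2 * (n - m) * F n m = m * (2 * n - m - 1) * F n m.+1.
Proof.
elim: n m => [|n IH] m; first by rewrite /= !muln0.
case: m => [|m]; first by rewrite F0 muln0 mul0n.
have I1 := IH m; have I2 := IH m.+1.
rewrite !FS.
case: (leqP n m) => hnm.
  by rewrite (@Fgt n m.+1) ?(@Fgt n m.+2) ?muln0 ?addn0; try lia.
move: I1 I2; set X := F n m; set Y := F n m.+1; set Z := F n m.+2.
have [t et] : exists t, n = m + 1 + t by exists (n - m - 1); lia.
have -> : n - m = t + 1 by lia.
have -> : 2 * n - m - 1 = m + 1 + 2 * t by lia.
have -> : n - m.+1 = t by lia.
have -> : 2 * n - m.+1 - 1 = m + 2 * t by lia.
have -> : n.+1 - m.+1 = t + 1 by lia.
have -> : 2 * n - m.+1 = m + 1 + 2 * t by lia.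
have -> : 2 * n.+1 - m.+1 - 1 = m + 2 + 2 * t by lia.
have -> : 2 * n - m.+2 = m + 2 * t by lia.
move=> I1 I2.
nia.
Qed.

Lemma Frec n m : 2 <= n -> 1 <= m -> F n m = m * F n m.+1 + F n.-1 m.-1.
Proof.
case: n => [|k] // hk; case: m => [|m] // _.
rewrite !FS /=.
have I := FD k m.+1.
case: (leqP k m) => hkm.
  by rewrite (@Fgt k m.+1) ?(@Fgt k m.+2) ?muln0 ?addn0; try lia.
move: I; set Y := F k m.+1; set Z := F k m.+2; set X := F k m.
have -> : 2 * k - m.+1 - 1 = m + 2 * (k - m.+1) by lia.
have -> : 2 * k - m.+1 = m + 1 + 2 * (k - m.+1) by lia.
have -> : 2 * k - m.+2 = m + 2 * (k - m.+1) by lia.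
move: (k - m.+1) => t I.
nia.
Qed.

Lemma G_set0 N m : G (set0 : {set 'I_N}) m = (m == 0 : nat).
Proof.
set x0 : ({set {set 'I_N}} * {ffun {set 'I_N} -> {perm 'I_N}})%type := (set0, [ffun => 1%g]).
have E : forall x, (x \in LCs set0 m) = (x == x0) && (m == 0).
  move=> [P c]; rewrite /LCs inE /=.
  apply/andP/andP => [[H /eqP e]|[/eqP [-> ->] /eqP ->]].
    have /andP[/lpAP[H1 H2 H3 H4] /cyccP[C1 C2]] := H.
    have P0 : P = set0.
      apply/setP => B; rewrite inE; apply/negP => BP.
      have : B != set0 by apply: contraNneq H1 => <-.
      by case/set0Pn => i iB; move: (H2 B i BP iB); rewrite inE.
    have c1 : c = [ffun => 1%g].
      by apply/ffunP => B; rewrite ffunE C2 // P0 inE.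
    split; first by rewrite P0 c1.
    rewrite -e num_scmeE P0; apply/eqP; apply/eqP; rewrite cards_eq0; apply/eqP/setP => i.
    by rewrite !inE; apply/negP => /andP[_ /existsP[B]]; rewrite inE.
  split.
    apply/andP; split.
      by apply/lpAP; split => [|B i|i|E F]; rewrite ?inE.
    by apply/cyccP; split => B; rewrite ?inE // ffunE.
  rewrite num_scmeE; apply/eqP; apply/eqP; rewrite cards_eq0; apply/eqP/setP => i.
  by rewrite !inE; apply/negP => /andP[_ /existsP[B]]; rewrite inE.
rewrite /G; case: (m == 0) in E *.
  have E' : LCs set0 m =i pred1 x0 by move=> x; move: (E x); rewrite andbT.
  by rewrite (eq_card E') card1.
by apply: eq_card0 => x; move: (E x); rewrite andbF.
Qed.

Lemma card_lt N k (hk : k <= N) : #|[set i : 'I_N | i < k]| = k.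
Proof.
have -> : [set i : 'I_N | i < k] = [set widen_ord hk j | j : 'I_k].
  apply/setP => i; rewrite inE; apply/idP/imsetP => [ik|[j _ ->]].
    by exists (Ordinal ik) => //; apply: val_inj.
  by rewrite /= ltn_ord.
by rewrite card_imset ?card_ord // => u v /(congr1 val) /= e; apply: val_inj.
Qed.

Lemma H_eq N k m : k <= N -> G [set i : 'I_N | i < k] m = F k m.
Proof.
elim: k m => [|k IH] m hk.
  have -> : [set i : 'I_N | i < 0] = set0 by apply/setP => i; rewrite !inE.
  exact: G_set0.
set a := Ordinal hk; set A := [set i : 'I_N | i < k].
have e : [set i : 'I_N | i < k.+1] = a |: A.
  apply/setP => i; rewrite !inE ltnS leq_eqVlt -(inj_eq val_inj) /=.
  by [].
have aA : a \notin A by rewrite inE /= ltnn.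
have ltA : forall x, x \in A -> x < a by move=> x; rewrite inE.
rewrite e (G_rec aA ltA) FS card_lt ?(ltnW hk) //.
by case: m => [|m]; rewrite ?IH ?(ltnW hk).
Qed.

Lemma f_eq n m : f n m = F n m.
Proof.
rewrite -(H_eq m (leqnn n)) /f /G /LCs.
have -> : [set i : 'I_n | i < n] = setT by apply/setP => i; rewrite !inE ltn_ord.
by apply: eq_card => x; rewrite !inE.
Qed.

Theorem proposition4p6 :
  f 1 1 = 1%N /\
  (forall n : nat, (1 <= n)%N -> f n 0 = 0%N) /\
  (forall n m : nat, (n < m)%N -> f n m = 0%N) /\
  (forall n m : nat, (2 <= n)%N -> (1 <= m)%N ->
     f n m = (m * f n m.+1 + f n.-1 m.-1)%N).
Proof.
split; first by rewrite f_eq.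
split; first by case=> [//|n] _; rewrite f_eq F0.
split; first by move=> n m h; rewrite f_eq Fgt.
by move=> n m hn hm; rewrite !f_eq Frec.
Qed.
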